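(* For any special object $L$ of $\mathcal V$, the degree $\beta(L)$ of the minimal polynomial $m_L(x)$ satisfies $\beta(L)\equiv t\pmod 2$.
   Context: Let $\Bbbk$ be a field of characteristic $\neq2$, $t\in\{0,1\}$, and let $\mathcal{NB}_t$ be the nil-Brauer category, regarded as an ungraded strict $\Bbbk$-linear monoidal category (tensor $\star$, unit $\mathbb1$, composition $\circ$) generated by an object $B$ and morphisms $x:B\to B$, $\tau:B\star B\to B\star B$, $\cap:B\star B\to\mathbb1$, $\cup:\mathbb1\to B\star B$ with relations ($1=1_B$): $\tau\circ\tau=0$; $(\tau\star1)\circ(1\star\tau)\circ(\tau\star1)=(1\star\tau)\circ(\tau\star1)\circ(1\star\tau)$; $\cap\circ\cup=t1_{\mathbb1}$; $(\cap\star1)\circ(1\star\cup)=1=(1\star\cap)\circ(\cup\star1)$; $\cap\circ\tau=0$; $(1\star\cap)\circ(\tau\star1)=(\cap\star1)\circ(1\star\tau)$; $(x\star1)\circ\tau-\tau\circ(1\star x)=1\star1-\cup\circ\cap$; $\cap\circ(1\star x)=-\cap\circ(x\star1)$. Let $\mathcal V$ be a strict $\mathcal{NB}_t$-module category, i.e. a $\Bbbk$-linear category with a strict $\Bbbk$-linear monoidal functor $\mu$ from $\mathcal{NB}_t$ to the monoidal category of $\Bbbk$-linear endofunctors of $\mathcal V$; write $B$ for $\mu(B)$. An object $L$ is special if $\mathrm{End}_{\mathcal V}(L)=\Bbbk$ and $\mathrm{End}_{\mathcal V}(BL)$ is finite-dimensional; $m_L(x)$ is the minimal polynomial of $\mu(x)_L:BL\to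 BL$ (equal to $1$ if $BL=0$). *)

(* Defs.v *)
From HB Require Import structures.
From mathcomp Require Import all_boot all_order all_algebra.
Set Implicit Arguments. Unset Strict Implicit. Unset Printing Implicit Defensive.
Import GRing.Theory.
Local Open Scope ring_scope.

Record kcat (k : fieldType) := KCat {
  ob : Type;
  hom : ob -> ob -> lmodType k;
  comp : forall X Y Z : ob, hom Y Z -> hom X Y -> hom X Z;
  idm : forall X : ob, hom X X;
  comp_linl : forall X Y Z (a : k) (f g : hom Y Z) (h : hom X Y),
      comp (a *: f + g) h = a *: comp f h + comp g h;
  comp_linr : forall X Y Z (a : k) (f : hom Y Z) (g h : hom X Y),
      comp f (a *: g + h) = a *: comp f g + comp f h;
  compA : forall W X Y Z (f : hom Y Z) (g : hom X Y) (h : hom W X),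
      comp f (comp g h) = comp (comp f g) h;
  comp1m : forall X Y (f : hom X Y), comp (idm Y) f = f;
  compm1 : forall X Y (f : hom X Y), comp f (idm X) = f
}.
Arguments ob {_} _.
Arguments hom {_} _ _ _.
Arguments comp {_ _ _ _ _} _ _.
Arguments idm {_} _ _.

(** A strict k-linear monoidal
    functor mu : NB_t -> End(V) is the same as the image B = mu(B) (a k-linear
    endofunctor of V) together with natural transformations
    x = mu(x) : B => B, tau = mu(tau) : B B => B B, cap = mu(cap) : B B => Id,
    cup = mu(cup) : Id => B B, satisfying the defining relations of NB_t.
    Convention for the tensor product of endofunctors: F * G = F o G, and for
    natural transformations (f * g)_L = f_{G' L} o F(g_L); hence
    (tau*1)_L = tau_{B L}, (1*tau)_L = B(tau_L), etc. *)
Record NBmodule (k : fieldType) (t : bool) (V : kcat k) := NBMod {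
  Bo : ob V -> ob V;
  Bm : forall X Y : ob V, hom V X Y -> hom V (Bo X) (Bo Y);
  Bm_lin : forall X Y (a : k) (f g : hom V X Y),
      Bm (a *: f + g) = a *: Bm f + Bm g;
  Bm_id : forall X, Bm (idm V X) = idm V (Bo X);
  Bm_comp : forall X Y Z (f : hom V Y Z) (g : hom V X Y),
      Bm (comp f g) = comp (Bm f) (Bm g);
  xx : forall X, hom V (Bo X) (Bo X);
  tau : forall X, hom V (Bo (Bo X)) (Bo (Bo X));
  cap : forall X, hom V (Bo (Bo X)) X;
  cup : forall X, hom V X (Bo (Bo X));
  xx_nat : forall X Y (f : hom V X Y), comp (xx Y) (Bm f) = comp (Bm f) (xx X);
  tau_nat : forall X Y (f : hom V X Y),
      comp (tau Y) (Bm (Bm f)) = comp (Bm (Bm f)) (tau X);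
  cap_nat : forall X Y (f : hom V X Y), comp (cap Y) (Bm (Bm f)) = comp f (cap X);
  cup_nat : forall X Y (f : hom V X Y), comp (cup Y) f = comp (Bm (Bm f)) (cup X);
  rel_tau2 : forall X, comp (tau X) (tau X) = 0;
  rel_braid : forall X,
      comp (tau (Bo X)) (comp (Bm (tau X)) (tau (Bo X)))
      = comp (Bm (tau X)) (comp (tau (Bo X)) (Bm (tau X)));
  rel_bubble : forall X, comp (cap X) (cup X) = (t%:R : k) *: idm V X;
  rel_zigzag1 : forall X, comp (cap (Bo X)) (Bm (cup X)) = idm V (Bo X);
  rel_zigzag2 : forall X, comp (Bm (cap X)) (cup (Bo X)) = idm V (Bo X);
  rel_captau : forall X, comp (cap X) (tau X) = 0;
  rel_tauslide : forall X,
      comp (Bm (cap X)) (tau (Bo X)) = comp (cap (Bo X)) (Bm (tau X));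
  rel_dot : forall X,
      comp (xx (Bo X)) (tau X) - comp (tau X) (Bm (xx X))
      = idm V (Bo (Bo X)) - comp (cup X) (cap X);
  rel_capdot : forall X,
      comp (cap X) (Bm (xx X)) = - comp (cap X) (xx (Bo X))
}.
Arguments Bo {_ _ _} _ _.
Arguments xx {_ _ _} _ _.

Fixpoint cpow (k : fieldType) (V : kcat k) (X : ob V) (a : hom V X X) (n : nat)
  : hom V X X :=
  match n with 0 => idm V X | n'.+1 => comp a (cpow a n') end.

Definition peval (k : fieldType) (V : kcat k) (X : ob V) (p : {poly k})
  (a : hom V X X) : hom V X X :=
  \sum_(i < size p) p`_i *: cpow a i.

(** p is the minimal polynomial of a in End(X): monic, annihilates a, and of
    least degree among nonzero annihilating polynomials.  (If X = 0, i.e.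
    End(X) = 0, this gives p = 1, matching the paper's convention.) *)
Definition is_minpoly (k : fieldType) (V : kcat k) (X : ob V) (a : hom V X X)
  (p : {poly k}) : Prop :=
  p \is monic /\ peval p a = 0 /\
  forall q : {poly k}, q != 0 -> peval q a = 0 -> (size p <= size q)%N.

Definition findim_hom (k : fieldType) (V : kcat k) (X Y : ob V) : Prop :=
  exists s : seq (hom V X Y), forall f : hom V X Y,
    exists c : nat -> k, f = \sum_(i < size s) c i *: s`_i.

Definition End_is_k (k : fieldType) (V : kcat k) (L : ob V) : Prop :=
  idm V L != 0 /\ forall f : hom V L L, exists c : k, f = c *: idm V L.

Definition special (k : fieldType) (t : bool) (V : kcat k) (M : NBmodule t V)
  (L : ob V) : Prop :=
  End_is_k L /\ findim_hom (Bo M L) (Bo M L).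

(* Main.v *)
Require Import Defs.
From mathcomp Require Import all_boot all_order all_algebra.
Import GRing.Theory.
Local Open Scope ring_scope.

Lemma dbl0 (W : zmodType) (a : W) : a = a + a -> a = 0.
Proof. by move=> H; have := congr1 (fun z => z - a) H; rewrite addrK subrr. Qed.

Lemma compDl {k : fieldType} {V : kcat k} {X Y Z : ob V} (f g : Defs.hom V Y Z) (h : Defs.hom V X Y) :
  Defs.comp (f + g) h = Defs.comp f h + Defs.comp g h.
Proof. by have := comp_linl 1 f g h; rewrite !scale1r. Qed.
Lemma compDr {k : fieldType} {V : kcat k} {X Y Z : ob V} (f : Defs.hom V Y Z) (g h : Defs.hom V X Y) :
  Defs.comp f (g + h) = Defs.comp f g + Defs.comp f h.
Proof. by have := comp_linr 1 f g h; rewrite !scale1r. Qed.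
Lemma comp0l {k : fieldType} {V : kcat k} {X Y Z : ob V} (h : Defs.hom V X Y) :
  Defs.comp (0 : Defs.hom V Y Z) h = 0.
Proof. by apply: dbl0; rewrite -(compDl (0 : Defs.hom V Y Z) 0 h) addr0. Qed.
Lemma comp0r {k : fieldType} {V : kcat k} {X Y Z : ob V} (f : Defs.hom V Y Z) :
  Defs.comp f (0 : Defs.hom V X Y) = 0.
Proof. by apply: dbl0; rewrite -(compDr f 0 0) addr0. Qed.
Lemma compZl {k : fieldType} {V : kcat k} {X Y Z : ob V} (a : k) (f : Defs.hom V Y Z) (h : Defs.hom V X Y) :
  Defs.comp (a *: f) h = a *: Defs.comp f h.
Proof. by have := comp_linl a f 0 h; rewrite !addr0 comp0l addr0. Qed.
Lemma compZr {k : fieldType} {V : kcat k} {X Y Z : ob V} (a : k) (f : Defs.hom V Y Z) (h : Defs.hom V X Y) :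
  Defs.comp f (a *: h) = a *: Defs.comp f h.
Proof. by have := comp_linr a f h 0; rewrite !addr0 comp0r addr0. Qed.
Lemma compNl {k : fieldType} {V : kcat k} {X Y Z : ob V} (f : Defs.hom V Y Z) (h : Defs.hom V X Y) :
  Defs.comp (- f) h = - Defs.comp f h.
Proof. by rewrite -scaleN1r compZl scaleN1r. Qed.
Lemma compNr {k : fieldType} {V : kcat k} {X Y Z : ob V} (f : Defs.hom V Y Z) (h : Defs.hom V X Y) :
  Defs.comp f (- h) = - Defs.comp f h.
Proof. by rewrite -scaleN1r compZr scaleN1r. Qed.
Lemma compBl {k : fieldType} {V : kcat k} {X Y Z : ob V} (f g : Defs.hom V Y Z) (h : Defs.hom V X Y) :
  Defs.comp (f - g) h = Defs.comp f h - Defs.comp g h.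
Proof. by rewrite compDl compNl. Qed.
Lemma compBr {k : fieldType} {V : kcat k} {X Y Z : ob V} (f : Defs.hom V Y Z) (g h : Defs.hom V X Y) :
  Defs.comp f (g - h) = Defs.comp f g - Defs.comp f h.
Proof. by rewrite compDr compNr. Qed.
Lemma comp_suml {k : fieldType} {V : kcat k} {X Y Z : ob V} n (F : 'I_n -> Defs.hom V Y Z) (h : Defs.hom V X Y) :
  Defs.comp (\sum_(i < n) F i) h = \sum_(i < n) Defs.comp (F i) h.
Proof. exact: (big_morph (fun f => Defs.comp f h) (fun f g => compDl f g h) (comp0l h)). Qed.
Lemma comp_sumr {k : fieldType} {V : kcat k} {X Y Z : ob V} n (f : Defs.hom V Y Z) (F : 'I_n -> Defs.hom V X Y) :
  Defs.comp f (\sum_(i < n) F i) = \sum_(i < n) Defs.comp f (F i).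
Proof. exact: (big_morph (fun h => Defs.comp f h) (fun g h => compDr f g h) (comp0r f)). Qed.

Lemma BmD {k : fieldType} {t : bool} {V : kcat k} (M : NBmodule t V) {X Y : ob V} (f g : Defs.hom V X Y) :
  Bm M (f + g) = Bm M f + Bm M g.
Proof. by have := Bm_lin M 1 f g; rewrite !scale1r. Qed.
Lemma Bm0 {k : fieldType} {t : bool} {V : kcat k} (M : NBmodule t V) {X Y : ob V} :
  Bm M (0 : Defs.hom V X Y) = 0.
Proof. by apply: dbl0; rewrite -(BmD M (0 : Defs.hom V X Y) 0) addr0. Qed.
Lemma BmZ {k : fieldType} {t : bool} {V : kcat k} (M : NBmodule t V) {X Y : ob V} (a : k) (f : Defs.hom V X Y) :
  Bm M (a *: f) = a *: Bm M f.
Proof. by have := Bm_lin M a f 0; rewrite !addr0 Bm0 addr0. Qed.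
Lemma BmN {k : fieldType} {t : bool} {V : kcat k} (M : NBmodule t V) {X Y : ob V} (f : Defs.hom V X Y) :
  Bm M (- f) = - Bm M f.
Proof. by rewrite -scaleN1r BmZ scaleN1r. Qed.
Lemma Bm_sum {k : fieldType} {t : bool} {V : kcat k} (M : NBmodule t V) {X Y : ob V} n (F : 'I_n -> Defs.hom V X Y) :
  Bm M (\sum_(i < n) F i) = \sum_(i < n) Bm M (F i).
Proof. exact: (big_morph (@Bm _ _ _ M X Y) (@BmD _ _ _ M X Y) (@Bm0 _ _ _ M X Y)). Qed.


Lemma phipsi {k : fieldType} {t : bool} {V : kcat k} (M : NBmodule t V) (X : ob V)
  (g : Defs.hom V X (Bo M (Bo M X))) :
  g = Defs.comp (Bm M (Defs.comp (cap M (Bo M X)) (Bm M g))) (cup M X).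
Proof. by rewrite Bm_comp -Defs.compA -cup_nat Defs.compA rel_zigzag2 comp1m. Qed.

Lemma psiphi {k : fieldType} {t : bool} {V : kcat k} (M : NBmodule t V) (X : ob V)
  (f : Defs.hom V (Bo M X) (Bo M X)) :
  f = Defs.comp (cap M (Bo M X)) (Bm M (Defs.comp (Bm M f) (cup M X))).
Proof. by rewrite Bm_comp Defs.compA cap_nat -Defs.compA rel_zigzag1 compm1. Qed.

Lemma xx_cup {k : fieldType} {t : bool} {V : kcat k} (M : NBmodule t V) (X : ob V) :
  Defs.comp (xx M (Bo M X)) (cup M X) = - Defs.comp (Bm M (xx M X)) (cup M X).
Proof.
rewrite {1}(phipsi M X (Defs.comp (xx M (Bo M X)) (cup M X))).
rewrite [Bm M (Defs.comp (xx _ _) _)]Bm_comp Defs.compA rel_capdot compNl -Defs.compA xx_nat Defs.compA rel_zigzag1 comp1m.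
by rewrite BmN compNl.
Qed.

Lemma tau_rot {k : fieldType} {t : bool} {V : kcat k} (M : NBmodule t V) (Y : ob V) :
  tau M Y = Defs.comp (Bm M (Bm M (cap M Y)))
     (Defs.comp (Bm M (tau M (Bo M Y))) (cup M (Bo M (Bo M Y)))).
Proof.
by rewrite Defs.compA -Bm_comp rel_tauslide Bm_comp -Defs.compA -cup_nat Defs.compA rel_zigzag2 comp1m.
Qed.

Lemma tau_cup {k : fieldType} {t : bool} {V : kcat k} (M : NBmodule t V) (X : ob V) :
  Defs.comp (tau M X) (cup M X) = 0.
Proof.
rewrite (phipsi M X (Defs.comp (tau M X) (cup M X))).
rewrite [Bm M (Defs.comp (tau _ _) _)]Bm_comp Defs.compA -rel_tauslide -Defs.compA.
rewrite [tau M (Bo M X)]tau_rot.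
rewrite -!Defs.compA cup_nat.
rewrite !Defs.compA.
rewrite -[Defs.comp (Bm M (cap M X)) _](Bm_comp M).
rewrite -[Defs.comp (Bm M (Defs.comp _ _)) (Bm M (tau _ _))](Bm_comp M).
rewrite -[Defs.comp (Bm M (Defs.comp _ _)) (Bm M (Bm M (Bm M _)))](Bm_comp M).
rewrite -!Defs.compA tau_nat.
rewrite [Defs.comp (Bm M (cap M (Bo M X))) _]Defs.compA.
rewrite -[Defs.comp (Bm M (cap M (Bo M X))) _](Bm_comp M) rel_zigzag1 Bm_id comp1m.
by rewrite rel_captau Bm0 comp0l Bm0 comp0l.
Qed.

Lemma Bm_cup_inj {k : fieldType} {t : bool} {V : kcat k} (M : NBmodule t V) (X : ob V)
  (f : Defs.hom V (Bo M X) (Bo M X)) : Defs.comp (Bm M f) (cup M X) = 0 -> f = 0.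
Proof. by move=> H; rewrite (psiphi M X f) H Bm0 comp0r. Qed.


Lemma cpowSr {k : fieldType} {V : kcat k} {X : ob V} (a : Defs.hom V X X) n :
  cpow a n.+1 = Defs.comp (cpow a n) a.
Proof.
elim: n => [|n IH] /=; first by rewrite comp1m compm1.
by rewrite -Defs.compA -IH.
Qed.

Lemma cpow_Bm {k : fieldType} {t : bool} {V : kcat k} (M : NBmodule t V) {X : ob V}
  (a : Defs.hom V X X) n : Bm M (cpow a n) = cpow (Bm M a) n.
Proof. by elim: n => [|n IH] /=; rewrite ?Bm_id // Bm_comp IH. Qed.

Lemma cpow_comm {k : fieldType} {V : kcat k} {X : ob V} (a b : Defs.hom V X X) n :
  Defs.comp a b = Defs.comp b a -> Defs.comp (cpow a n) b = Defs.comp b (cpow a n).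
Proof.
move=> H; elim: n => [|n IH] /=; first by rewrite comp1m compm1.
by rewrite -Defs.compA IH !Defs.compA H.
Qed.

Lemma peval_sumN {k : fieldType} {V : kcat k} {X : ob V} (p : {poly k}) (a : Defs.hom V X X) N :
  (size p <= N)%N -> peval p a = \sum_(i < N) p`_i *: cpow a i.
Proof.
move=> HN; rewrite /peval (big_ord_widen N (fun i => p`_i *: cpow a i)) //.
rewrite big_mkcond /=; apply: eq_bigr => i _.
by case: ifP => // /negbT; rewrite -leqNgt => H; rewrite nth_default // scale0r.
Qed.

Lemma peval0 {k : fieldType} {V : kcat k} {X : ob V} (a : Defs.hom V X X) :
  peval 0 a = 0.
Proof. by rewrite /peval size_poly0 big_ord0. Qed.

Lemma pevalD {k : fieldType} {V : kcat k} {X : ob V} (p q : {poly k}) (a : Defs.hom V X X) :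
  peval (p + q) a = peval p a + peval q a.
Proof.
pose N := maxn (size p) (size q).
rewrite (peval_sumN _ a _ (size_polyD p q)) (peval_sumN p a N) ?leq_maxl //.
rewrite (peval_sumN q a N) ?leq_maxr // -big_split /=.
by apply: eq_bigr => i _; rewrite coefD scalerDl.
Qed.

Lemma pevalZ {k : fieldType} {V : kcat k} {X : ob V} (c : k) (p : {poly k}) (a : Defs.hom V X X) :
  peval (c *: p) a = c *: peval p a.
Proof.
rewrite (peval_sumN _ a _ (size_scale_leq c p)) /peval scaler_sumr.
by apply: eq_bigr => i _; rewrite coefZ scalerA.
Qed.

Lemma pevalN {k : fieldType} {V : kcat k} {X : ob V} (p : {poly k}) (a : Defs.hom V X X) :
  peval (- p) a = - peval p a.
Proof. by apply/eqP; rewrite -subr_eq0 opprK -pevalD addNr peval0. Qed.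

Lemma peval_sum {k : fieldType} {V : kcat k} {X : ob V} n (F : 'I_n -> {poly k}) (a : Defs.hom V X X) :
  peval (\sum_(i < n) F i) a = \sum_(i < n) peval (F i) a.
Proof. exact: (big_morph (fun p => peval p a) (fun p q => pevalD p q a) (peval0 a)). Qed.

Lemma pevalXn {k : fieldType} {V : kcat k} {X : ob V} n (a : Defs.hom V X X) :
  peval 'X^n a = cpow a n.
Proof.
rewrite /peval size_polyXn big_ord_recr /= coefXn eqxx scale1r big1 ?add0r //.
by move=> i _; rewrite coefXn (ltn_eqF (ltn_ord i)) scale0r.
Qed.

Lemma pevalC {k : fieldType} {V : kcat k} {X : ob V} (c : k) (a : Defs.hom V X X) :
  peval c%:P a = c *: idm V X.
Proof. by rewrite (peval_sumN _ a _ (size_polyC_leq1 c)) big_ord1 coefC. Qed.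

Lemma pevalMX {k : fieldType} {V : kcat k} {X : ob V} (p : {poly k}) (a : Defs.hom V X X) :
  peval (p * 'X) a = Defs.comp (peval p a) a.
Proof.
have HS : (size (p * 'X)%R <= (size p).+1)%N.
  by apply: (leq_trans (size_polyMleq p ('X))); rewrite size_polyX addn2.
rewrite (peval_sumN _ a _ HS) big_ord_recl coefMX eqxx scale0r add0r /peval comp_suml.
by apply: eq_bigr => i _; rewrite coefMX /= add0n compZl -cpowSr.
Qed.



Fixpoint Ppol {k : fieldType} (b : nat -> k) (n : nat) : {poly k} :=
  match n with
  | 0 => 0
  | n'.+1 => - (Ppol b n' * 'X) - 'X^n' + (b n')%:P
  end.

Lemma size_Ppol {k : fieldType} (b : nat -> k) n : (size (Ppol b n) <= n)%N.
Proof.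
elim: n => [|n IH] /=; first by rewrite size_poly0.
apply: (leq_trans (size_polyD _ _)); rewrite geq_max; apply/andP; split;
  last by apply: (leq_trans (size_polyC_leq1 _)).
apply: (leq_trans (size_polyD _ _)); rewrite geq_max !size_polyN size_polyXn leqnn andbT.
apply: (leq_trans (size_polyMleq _ _)); rewrite size_polyX addn2 /=.
by rewrite ltnS.
Qed.

Lemma coef_Ppol {k : fieldType} (b : nat -> k) n :
  (Ppol b n.+1)`_n = if odd n then - b 0%N else b 0%N - 1.
Proof.
elim: n => [|n IH].
  by rewrite /= !coefD !coefN coefMX coefXn coefC /= oppr0 sub0r addrC.
rewrite [Ppol b n.+2]/= !coefD !coefN coefMX coefXn coefC /= IH eqxx.
by case: (odd n) => /=; rewrite addr0 ?opprK // opprB addrAC subrr sub0r.  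
Qed.


Lemma subrKA_aux (W : zmodType) (a b c : W) : a - (b - c) = a - b + c.
Proof. by rewrite opprB addrA addrAC. Qed.

Theorem corollary3p11 (k : fieldType) (hk : (2%:R : k) != 0) (t : bool)
  (V : kcat k) (M : NBmodule t V) (L : ob V) :
  special M L ->
  forall m : {poly k}, is_minpoly (xx M L) m -> odd (size m).-1 = t.
Proof.
move=> [[hid hE] _] m [mon [m0 mmin]].
have mnz : m != 0 := monic_neq0 mon.
have lc : lead_coef m = 1 := monicP mon.
case Es: (size m) => [|s]; first by move: mnz; rewrite -size_poly_gt0 Es.
rewrite /=.
case: s Es => [|s] Es.
  have hI : idm V (Bo M L) = 0.
    rewrite -m0 /peval Es big_ord1 /=.
    by move: lc; rewrite lead_coefE Es /= => ->; rewrite scale1r.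
  have hd : cup M L = 0.
    by rewrite -[cup M L]comp1m -Bm_id hI Bm0 comp0l.
  have := rel_bubble M L; rewrite hd comp0r.
  move=> H; have [Ht|Ht] := boolP t; last by [].
  by move: hid; rewrite H Ht scale1r eqxx.
set x := xx M L.
set z := Bm M x.
set y := xx M (Bo M L).
set d := cup M L.
set c := cap M L.
pose f n := Defs.comp c (Defs.comp (cpow z n) d).
have ex n : exists a : k, f n == a *: idm V L.
  by have [a ->] := hE (f n); exists a.
pose b n := if n == 0%N then (t%:R : k) else xchoose (ex n).
have hb n : f n = b n *: idm V L.
  rewrite /b; case: eqP => [->|_]; last exact/eqP/(xchooseP (ex n)).
  by rewrite /f /= comp1m rel_bubble.
pose Ev p := Defs.comp (Bm M (peval p x)) d.
have Ev0 : Ev 0 = 0 by rewrite /Ev peval0 Bm0 comp0l.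
have EvD p1 p2 : Ev (p1 + p2) = Ev p1 + Ev p2 by rewrite /Ev pevalD BmD compDl.
have EvN p : Ev (- p) = - Ev p by rewrite /Ev pevalN BmN compNl.
have EvZ a p : Ev (a *: p) = a *: Ev p by rewrite /Ev pevalZ BmZ compZl.
have EvXn n : Ev 'X^n = Defs.comp (cpow z n) d by rewrite /Ev pevalXn cpow_Bm.
have EvC a : Ev a%:P = a *: d by rewrite /Ev pevalC BmZ Bm_id compZl comp1m.
have EvX p : Defs.comp y (Ev p) = - Ev (p * 'X).
  rewrite /Ev Defs.compA xx_nat -Defs.compA xx_cup compNr Defs.compA.
  by rewrite -Bm_comp pevalMX.
pose W n := Defs.comp (tau M L) (Defs.comp (cpow z n) d).
have Hdot : Defs.comp (tau M L) z = Defs.comp y (tau M L) - (idm V _ - Defs.comp d c).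
  by rewrite -(rel_dot M L) subKr.
have HW n : W n = Ev (Ppol b n).
  elim: n => [|n IH].
    by rewrite /W /= comp1m tau_cup Ev0.
  rewrite /W /= Defs.compA Defs.compA Hdot -Defs.compA compBl compDl compNl comp1m.
  rewrite -!Defs.compA -/(W n) -/(f n) IH EvX hb compZr compm1.
  rewrite !EvD !EvN EvXn EvC.
  by rewrite subrKA_aux.
pose q := \sum_(i < size m) m`_i *: Ppol b i.
have Evsum : Ev q = 0.
  rewrite /q (big_morph Ev EvD Ev0).
  under eq_bigr => i _ do rewrite EvZ -HW.
  rewrite /W.
  under eq_bigr => i _ do rewrite -compZr -compZl.
  rewrite -comp_sumr -comp_suml.
  have -> : \sum_(i < size m) m`_i *: cpow z i = Bm M (peval m x).
    by rewrite /peval Bm_sum; apply: eq_bigr => i _; rewrite BmZ cpow_Bm.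
  by rewrite m0 Bm0 comp0l comp0r.
have q0 : peval q x = 0 := Bm_cup_inj M L _ Evsum.
have szq : (size q <= s.+1)%N.
  rewrite /q; apply: (big_ind (fun p : {poly k} => (size p <= s.+1)%N)).
  - by rewrite size_poly0.
  - by move=> p1 p2 h1 h2; apply: (leq_trans (size_polyD _ _)); rewrite geq_max h1 h2.
  - move=> i _; apply: (leq_trans (size_scale_leq _ _)); apply: (leq_trans (size_Ppol _ _)).
    by rewrite -ltnS -Es ltn_ord.
have qz : q = 0.
  apply/eqP; apply: contraT => nz; have := mmin q nz q0.
  by rewrite Es leqNgt ltnS szq.
have : q`_s = 0 by rewrite qz coef0.
rewrite /q coef_sum Es big_ord_recr big1; last first.
  move=> i _; rewrite coefZ [(Ppol b _)`_s]nth_default ?mulr0 //.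
  by apply: (leq_trans (size_Ppol _ _)); exact: ltn_ord i.
rewrite /= -[- (Ppol b s * 'X) - 'X^s + (b s)%:P]/(Ppol b s.+1) add0r coefZ coef_Ppol.
have -> : m`_s.+1 = 1 by move: lc; rewrite lead_coefE Es.
rewrite mul1r /b eqxx.
have [Ht|Ht] := boolP t; case: (odd s) => /=.
- by move/eqP; rewrite oppr_eq0 oner_eq0.
- by rewrite subrr.
- by [].
- by move/eqP; rewrite sub0r oppr_eq0 oner_eq0.
Qed.
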